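(* Let $f\in R(A_2)$, $g\in R(A_1^* )$, $k\in K_2$, let $x\in D_2=D(A_2)\cap D(A_1^* )$ be the unique solution of $A_2x=f$, $A_1^*x=g$, $\pi_2x=k$, let $\tilde x\in H_2$, $e:=x-\tilde x$, $e_{A_1}:=\pi_{A_1}e$, $e_{A_2^*}:=\pi_{A_2^*}e$, $e_{K_2}:=\pi_2e$. (i) If $\tilde x\in D(A_1^* )$, then $e\in D(A_1^* )$, $e_{A_1}\in D(\mathcal{A}_1^* )$ with $A_1^*e_{A_1}=A_1^*e$, and $\|e_{A_1}\|_{H_2}\le c_1\|A_1^*\tilde x-g\|_{H_1}=c_1\|A_1^*e\|_{H_1}$. (ii) If $\tilde x\in D(A_2)$, then $e\in D(A_2)$, $e_{A_2^*}\in D(\mathcal{A}_2)$ with $A_2e_{A_2^*}=A_2e$, and $\|e_{A_2^*}\|_{H_2}\le c_2\|A_2\tilde x-f\|_{H_3}=c_2\|A_2e\|_{H_3}$. (iii) If $\tilde x\in D_2$, then $e\in D_2$ and $$\|e\|_{D_2}^2=\|e_{A_1}\|^2_{H_2}+\|e_{K_2}\|^2_{H_2}+\|e_{A_2^*}\|^2_{H_2}+\|A_2e\|^2_{H_3}+\|A_1^*e\|^2_{H_1}\le\|e_{K_2}\|^2_{H_2}+(1+c_2^2)\|A_2e\|^2_{H_3}+(1+c_1^2)\|A_1^*e\|^2_{H_1},$$ with $e_{K_2}=k-\pi_2\tilde x$, $A_2e=f-A_2\tilde x$, $A_1^*e=g-A_1^*\tilde x$.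
   Context: Let $H_0,\dots,H_4$ be Hilbert spaces and, for $\ell=0,\dots,3$, $A_\ell:D(A_\ell)\subset H_\ell\to H_{\ell+1}$ densely defined closed linear operators with Hilbert space adjoints $A_\ell^*$, satisfying $R(A_\ell)\subset N(A_{\ell+1})$ for $\ell=0,1,2$. Standing assumption: $R(A_1)$ and $R(A_2)$ are closed and $K_2$ is finite dimensional. $D_2:=D(A_2)\cap D(A_1^* )$ with norm $\|x\|_{D_2}^2=\|x\|^2_{H_2}+\|A_2x\|^2_{H_3}+\|A_1^*x\|^2_{H_1}$; $K_2:=N(A_2)\cap N(A_1^* )$, $\pi_2:H_2\to K_2$ orthogonal projector; $\pi_{A_1}$, $\pi_{A_2^*}$ orthogonal projectors of $H_2$ onto $R(A_1)$, $R(A_2^* )$. $D(\mathcal{A}_2):=D(A_2)\cap R(A_2^* )$, $D(\mathcal{A}_1^* ):=D(A_1^* )\cap R(A_1)$. $c_\ell\in(0,\infty)$ is the best constant with $\|x\|_{H_\ell}\le c_\ell\|A_\ell x\|_{H_{\ell+1}}$ for $x\in D(A_\ell)\cap R(A_\ell^* )$ (equivalently $\|y\|_{H_{\ell+1}}\le c_\ell\|A_\ell^*y\|_{H_\ell}$ for $y\in D(A_\ell^* )\cap R(A_\ell)$). *)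

(* Defs.v *)
From HB Require Import structures.
From mathcomp Require Import all_boot all_order all_algebra.
From mathcomp Require Import reals.
Set Implicit Arguments. Unset Strict Implicit. Unset Printing Implicit Defensive.
Import Order.TTheory GRing.Theory Num.Theory.
Local Open Scope ring_scope.

Section Hilbert.
Variable R : realType.

Record inner_product (V : lmodType R) := InnerProduct {
  ip : V -> V -> R;
  ip_sym : forall x y, ip x y = ip y x;
  ip_linl : forall (a : R) (x y z : V), ip (a *: x + y) z = a * ip x z + ip y z;
  ip_ge0 : forall x, 0 <= ip x x;
  ip_eq0 : forall x, ip x x = 0 -> x = 0
}.

Definition ip_norm (V : lmodType R) (s : inner_product V) (x : V) : R :=
  Num.sqrt (ip s x x).

Definition ip_cvg (V : lmodType R) (s : inner_product V) (u : nat -> V) (l : V) :=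
  forall eps : R, 0 < eps -> exists N : nat,
    forall n : nat, (N <= n)%N -> ip_norm s (u n - l) < eps.

Definition ip_cauchy (V : lmodType R) (s : inner_product V) (u : nat -> V) :=
  forall eps : R, 0 < eps -> exists N : nat,
    forall m n : nat, (N <= m)%N -> (N <= n)%N -> ip_norm s (u m - u n) < eps.

Definition ip_complete (V : lmodType R) (s : inner_product V) :=
  forall u : nat -> V, ip_cauchy s u -> exists l, ip_cvg s u l.

Record hilbert := Hilbert {
  hspace :> lmodType R;
  hinner : inner_product hspace;
  hcomplete : ip_complete hinner
}.

Definition inner (H : hilbert) (x y : H) : R := ip (hinner H) x y.
Definition hnorm (H : hilbert) (x : H) : R := ip_norm (hinner H) x.
Definition hcvg (H : hilbert) (u : nat -> H) (l : H) := ip_cvg (hinner H) u l.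

Definition closed_set (H : hilbert) (S : H -> Prop) :=
  forall (u : nat -> H) (l : H), (forall n, S (u n)) -> hcvg u l -> S l.

Definition range (H H' : hilbert) (D : H -> Prop) (A : H -> H') : H' -> Prop :=
  fun y => exists x, D x /\ A x = y.

Definition kernel (H H' : hilbert) (D : H -> Prop) (A : H -> H') : H -> Prop :=
  fun x => D x /\ A x = 0.

Definition dd_closed_op (H H' : hilbert) (D : H -> Prop) (A : H -> H') :=
  [/\ D 0,
      (forall (a : R) x y, D x -> D y -> D (a *: x + y)),
      (forall (a : R) x y, D x -> D y -> A (a *: x + y) = a *: A x + A y),
      (forall (x : H) (eps : R), 0 < eps -> exists d, D d /\ hnorm (x - d) < eps) &
      (forall (u : nat -> H) (x : H) (y : H'),
          (forall n, D (u n)) -> hcvg u x -> hcvg (fun n => A (u n)) y ->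
          D x /\ A x = y)].

Definition is_adjoint (H H' : hilbert) (D : H -> Prop) (A : H -> H')
    (Ds : H' -> Prop) (As : H' -> H) :=
  (forall y : H', Ds y <-> exists z : H, forall x, D x -> inner (A x) y = inner x z)
  /\ (forall y : H', Ds y -> forall x, D x -> inner (A x) y = inner x (As y)).

Definition orth_proj (H : hilbert) (S : H -> Prop) (P : H -> H) :=
  forall x : H, S (P x) /\ (forall y, S y -> inner (x - P x) y = 0).

Definition finite_dim (H : hilbert) (S : H -> Prop) :=
  exists (n : nat) (b : 'I_n -> H), forall x, S x ->
    exists a : 'I_n -> R, x = \sum_(i < n) a i *: b i.

Definition poincare_bound (H H' : hilbert) (D : H -> Prop) (A : H -> H')
    (Ds : H' -> Prop) (As : H' -> H) (c : R) :=
  forall x, D x -> range Ds As x -> hnorm x <= c * hnorm (A x).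

Definition poincare_bound_adj (H H' : hilbert) (D : H -> Prop) (A : H -> H')
    (Ds : H' -> Prop) (As : H' -> H) (c : R) :=
  forall y, Ds y -> range D A y -> hnorm y <= c * hnorm (As y).

Definition best_const (H H' : hilbert) (D : H -> Prop) (A : H -> H')
    (Ds : H' -> Prop) (As : H' -> H) (c : R) :=
  [/\ 0 < c,
      poincare_bound D A Ds As c,
      (forall c', poincare_bound D A Ds As c' -> c <= c'),
      poincare_bound_adj D A Ds As c &
      (forall c', poincare_bound_adj D A Ds As c' -> c <= c')].

End Hilbert.

(* Main.v *)
Require Import Defs.
From HB Require Import structures.
From mathcomp Require Import all_boot all_order all_algebra.
From mathcomp Require Import reals.
From mathcomp Require Import ring lra.
Import Order.TTheory GRing.Theory Num.Theory.
Local Open Scope ring_scope.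
Set Implicit Arguments. Unset Strict Implicit.

Lemma in0l (R : realType) (H : hilbert R) (z : H) : inner 0 z = 0.
Proof.
have := ip_linl (hinner H) 1 0 0 z.
rewrite /inner scaler0 addr0 mul1r; lra.
Qed.

Lemma inDl (R : realType) (H : hilbert R) (x y z : H) :
  inner (x + y) z = inner x z + inner y z.
Proof. by have := ip_linl (hinner H) 1 x y z; rewrite scale1r mul1r. Qed.

Lemma inZl (R : realType) (H : hilbert R) (a : R) (x z : H) :
  inner (a *: x) z = a * inner x z.
Proof.
rewrite /inner; have := ip_linl (hinner H) a x 0 z; rewrite addr0 => ->.
by rewrite -/(inner 0 z) in0l addr0.
Qed.

Lemma inNl (R : realType) (H : hilbert R) (x z : H) :
  inner (- x) z = - inner x z.
Proof. by rewrite -scaleN1r inZl mulN1r. Qed.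

Lemma inBl (R : realType) (H : hilbert R) (x y z : H) :
  inner (x - y) z = inner x z - inner y z.
Proof. by rewrite inDl inNl. Qed.

Lemma inC (R : realType) (H : hilbert R) (x y : H) : inner x y = inner y x.
Proof. exact: ip_sym. Qed.

Lemma in0r (R : realType) (H : hilbert R) (z : H) : inner z 0 = 0.
Proof. by rewrite inC in0l. Qed.
Lemma inDr (R : realType) (H : hilbert R) (x y z : H) :
  inner z (x + y) = inner z x + inner z y.
Proof. by rewrite !(inC z) inDl. Qed.
Lemma inZr (R : realType) (H : hilbert R) (a : R) (x z : H) :
  inner z (a *: x) = a * inner z x.
Proof. by rewrite !(inC z) inZl. Qed.
Lemma inNr (R : realType) (H : hilbert R) (x z : H) :
  inner z (- x) = - inner z x.
Proof. by rewrite !(inC z) inNl. Qed.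
Lemma inBr (R : realType) (H : hilbert R) (x y z : H) :
  inner z (x - y) = inner z x - inner z y.
Proof. by rewrite !(inC z) inBl. Qed.

Lemma in_ge0 (R : realType) (H : hilbert R) (x : H) : 0 <= inner x x.
Proof. exact: ip_ge0. Qed.

Lemma in_eq0 (R : realType) (H : hilbert R) (x : H) : inner x x = 0 -> x = 0.
Proof. exact: ip_eq0. Qed.

Lemma hnorm_sq (R : realType) (H : hilbert R) (x : H) : hnorm x ^+ 2 = inner x x.
Proof. by rewrite /hnorm /ip_norm sqr_sqrtr //; apply: ip_ge0. Qed.

Lemma hnorm_ge0 (R : realType) (H : hilbert R) (x : H) : 0 <= hnorm x.
Proof. exact: sqrtr_ge0. Qed.

Lemma hnorm_lt (R : realType) (H : hilbert R) (x : H) (eps : R) :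
  0 < eps -> (hnorm x < eps) = (inner x x < eps ^+ 2).
Proof.
move=> e0; rewrite -[in RHS]ltr_sqrt ?exprn_gt0 // sqrtr_sqr ger0_norm ?(ltW e0) //.
Qed.

Lemma hnormN (R : realType) (H : hilbert R) (x : H) : hnorm (- x) = hnorm x.
Proof. by rewrite /hnorm /ip_norm -/(inner _ _) -/(inner x x) inNl inNr opprK. Qed.

Lemma young (R : realType) (H : hilbert R) (s : R) (a b : H) : 0 < s ->
  2 * inner a b <= s * inner a a + s^-1 * inner b b.
Proof.
move=> s0.
have := in_ge0 (s *: a - b).
rewrite !inBl !inBr !inZl !inZr (inC b a) => h.
rewrite -(ler_pM2l s0) mulrDr !mulrA mulfV ?gt_eqF // mul1r.
set p := inner a b in h *; set q := inner a a in h *; set r := inner b b in h *.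
nra.
Qed.

Lemma in_add_le (R : realType) (H : hilbert R) (s : R) (a b : H) : 0 < s ->
  inner (a + b) (a + b) <= (1 + s) * inner a a + (1 + s^-1) * inner b b.
Proof.
move=> s0; have := young a b s0.
rewrite !inDl !inDr (inC b a); lra.
Qed.

Lemma parallelogram (R : realType) (H : hilbert R) (a b : H) :
  inner (a + b) (a + b) + inner (a - b) (a - b) = 2 * inner a a + 2 * inner b b.
Proof. rewrite !inDl !inDr !inNl !inNr (inC b a); lra. Qed.

Lemma inZZ (R : realType) (H : hilbert R) (c : R) (a : H) :
  inner (c *: a) (c *: a) = c ^+ 2 * inner a a.
Proof. by rewrite inZl inZr mulrA expr2. Qed.


Lemma op0 (R : realType) (H H' : hilbert R) (D : H -> Prop) (A : H -> H') :
  dd_closed_op D A -> A 0 = 0.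
Proof.
case=> D0 _ Al _ _; have := Al 1 0 0 D0 D0.
rewrite scaler0 addr0 scale1r => /(congr1 (fun v => v - A 0)) /=.
by rewrite subrr addrK => <-.
Qed.

Lemma domZD (R : realType) (H H' : hilbert R) (D : H -> Prop) (A : H -> H') :
  dd_closed_op D A -> forall a x y, D x -> D y -> D (a *: x + y).
Proof. by case. Qed.

Lemma opZD (R : realType) (H H' : hilbert R) (D : H -> Prop) (A : H -> H') :
  dd_closed_op D A -> forall a x y, D x -> D y -> A (a *: x + y) = a *: A x + A y.
Proof. by case. Qed.

Lemma domB (R : realType) (H H' : hilbert R) (D : H -> Prop) (A : H -> H') :
  dd_closed_op D A -> forall x y, D x -> D y -> D (x - y).
Proof.
move=> hA x y Dx Dy; have := domZD hA (-1) Dy Dx.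
by rewrite scaleN1r addrC.
Qed.

Lemma opB (R : realType) (H H' : hilbert R) (D : H -> Prop) (A : H -> H') :
  dd_closed_op D A -> forall x y, D x -> D y -> A (x - y) = A x - A y.
Proof.
move=> hA x y Dx Dy; have := opZD hA (-1) Dy Dx.
by rewrite !scaleN1r addrC [RHS]addrC.
Qed.

Lemma domD (R : realType) (H H' : hilbert R) (D : H -> Prop) (A : H -> H') :
  dd_closed_op D A -> forall x y, D x -> D y -> D (x + y).
Proof. by move=> hA x y Dx Dy; have := domZD hA 1 Dx Dy; rewrite scale1r. Qed.

Lemma opD (R : realType) (H H' : hilbert R) (D : H -> Prop) (A : H -> H') :
  dd_closed_op D A -> forall x y, D x -> D y -> A (x + y) = A x + A y.
Proof. by move=> hA x y Dx Dy; have := opZD hA 1 Dx Dy; rewrite !scale1r. Qed.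

Lemma domZ (R : realType) (H H' : hilbert R) (D : H -> Prop) (A : H -> H') :
  dd_closed_op D A -> forall a x, D x -> D (a *: x).
Proof.
move=> hA a x Dx; have := domZD hA a Dx (let: And5 D0 _ _ _ _ := hA in D0).
by rewrite addr0.
Qed.

Lemma opZ (R : realType) (H H' : hilbert R) (D : H -> Prop) (A : H -> H') :
  dd_closed_op D A -> forall a x, D x -> A (a *: x) = a *: A x.
Proof.
move=> hA a x Dx; have := opZD hA a Dx (let: And5 D0 _ _ _ _ := hA in D0).
by rewrite addr0 (op0 hA) addr0.
Qed.

Lemma dense_orth (R : realType) (H H' : hilbert R) (D : H -> Prop) (A : H -> H') (w : H) :
  dd_closed_op D A -> (forall v, D v -> inner v w = 0) -> w = 0.
Proof.
case=> _ _ _ Dd _ hw; apply: in_eq0.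
have [//|wpos] := eqVneq (inner w w) 0.
have wgt : 0 < inner w w by rewrite lt_def wpos in_ge0.
have [d [Dd' hd]] := Dd w (Num.sqrt (inner w w)) (ltac:(by rewrite sqrtr_gt0)).
move: hd; rewrite hnorm_lt ?sqrtr_gt0 // sqr_sqrtr ?in_ge0 // => hd.
have e1 : inner w w = inner (w - d) w.
  by rewrite inBl (hw d) // subr0.
have := young (w - d) w (@ltr01 R); rewrite invr1 !mul1r -e1.
move=> h; exfalso; move: hd; apply/negP; rewrite -leNgt; lra.
Qed.

Lemma small_inv (R : realType) (c eps : R) : 0 < eps ->
  exists N : nat, forall n, (N <= n)%N -> c * (n.+1%:R)^-1 < eps.
Proof.
move=> e0; exists (Num.Def.trunc (`|c| / eps)) => n hn.
have h1 := truncnS_gt (`|c| / eps).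
have h2 : ((Num.Def.trunc (`|c| / eps)).+1%:R <= n.+1%:R :> R) by rewrite ler_nat.
have h3 : `|c| / eps < n.+1%:R by apply: lt_le_trans h1 h2.
rewrite ltr_pdivrMr // in h3.
have np : 0 < n.+1%:R :> R by rewrite ltr0n.
rewrite -/(c / _) ltr_pdivrMr //.
apply: le_lt_trans (real_ler_norm _) _; first by apply: num_real.
by rewrite mulrC.
Qed.

Lemma inAddZ (R : realType) (H : hilbert R) (a v : H) (t : R) :
  inner (a + t *: v) (a + t *: v) = inner a a + 2 * t * inner a v + t ^+ 2 * inner v v.
Proof.
rewrite !inDl !inDr !inZl !inZr (inC v a); set x := inner a v.
rewrite expr2; lra.
Qed.

Lemma inN (R : realType) (H : hilbert R) (a : H) : inner (- a) (- a) = inner a a.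
Proof. by rewrite inNl inNr opprK. Qed.

Lemma adj_ker (R : realType) (H H' : hilbert R) (D : H -> Prop) (A : H -> H')
  (Ds : H' -> Prop) (As : H' -> H) (y : H') :
  dd_closed_op D A -> is_adjoint D A Ds As ->
  (forall u, D u -> inner (A u) y = 0) -> Ds y /\ As y = 0.
Proof.
move=> hA [h1 h2] hy.
have Dy : Ds y by apply/h1; exists 0 => x Dx; rewrite in0r hy.
split=> //; apply: (dense_orth hA) => v Dv.
by rewrite -h2 // hy.
Qed.

Lemma adjB (R : realType) (H H' : hilbert R) (D : H -> Prop) (A : H -> H')
  (Ds : H' -> Prop) (As : H' -> H) (y y' : H') :
  dd_closed_op D A -> is_adjoint D A Ds As -> Ds y -> Ds y' ->
  Ds (y - y') /\ As (y - y') = As y - As y'.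
Proof.
move=> hA [h1 h2] Dy Dy'.
have D' : Ds (y - y').
  by apply/h1; exists (As y - As y') => x Dx; rewrite inBr inBr !h2.
split=> //; apply/eqP; rewrite -subr_eq0; apply/eqP.
apply: (dense_orth hA) => v Dv.
by rewrite inBr inBr -!h2 // inBr subrr.
Qed.

Lemma minimizer (R : realType) (H H' : hilbert R) (D : H -> Prop) (A : H -> H') (q : H) :
  dd_closed_op D A ->
  exists l, D l /\ forall w, D w ->
    inner (q - l) (q - l) + inner (A l) (A l) <= inner (q - w) (q - w) + inner (A w) (A w).
Proof.
move=> hA.
pose J u := inner (q - u) (q - u) + inner (A u) (A u).
have J0 : forall u, 0 <= J u by move=> u; rewrite addr_ge0 ?in_ge0.
pose E := (fun r => exists u, D u /\ r = J u) : classical_sets.set R.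
have D0 : D 0 by case: hA.
have hE : classical_sets.has_inf E.
  split; first by exists (J 0), 0.
  by exists 0 => r [u [_ ->]].
pose d := inf E.
have dle : forall w, D w -> d <= J w.
  by move=> w Dw; have := ge_inf hE.2; apply; exists w.
have d0 : 0 <= d by apply: lb_le_inf; [by exists (J 0), 0 | move=> r [u [_ ->]]].
have : forall n : nat, exists u, D u /\ J u < d + (n.+1%:R)^-1.
  move=> n; have [r [u [Du ->]] hr] := inf_adherent (ltac:(by rewrite invr_gt0 ltr0n) : 0 < (n.+1%:R : R)^-1) hE.
  by exists u.
move=> /boolp.choice [un hun].
have Dun n : D (un n) by case: (hun n).
have Jun n : J (un n) < d + (n.+1%:R)^-1 by case: (hun n).
have key : forall n m, inner (un n - un m) (un n - un m)
     + inner (A (un n) - A (un m)) (A (un n) - A (un m))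
     <= 2 * (n.+1%:R)^-1 + 2 * (m.+1%:R)^-1.
  move=> n m.
  pose mid := 2^-1 *: (un n + un m).
  have Dmid : D mid by apply: (domZ hA); apply: (domD hA).
  have Amid : A mid = 2^-1 *: (A (un n) + A (un m)).
    rewrite /mid (opZ hA) ?(opD hA) //; exact: (domD hA).
  have two : (2 : R) != 0 by rewrite pnatr_eq0.
  have e1 : (q - un m) + (q - un n) = 2 *: (q - mid).
    rewrite /mid scalerBr scalerA mulfV // scale1r.
    by rewrite -[2 : R]/(1 + 1) scalerDl scale1r addrACA opprD [- un m + _]addrC.
  have e2 : A (un n) + A (un m) = 2 *: A mid.
    by rewrite Amid scalerA mulfV // scale1r.
  have p1 := parallelogram (q - un m) (q - un n).
  have p2 := parallelogram (A (un n)) (A (un m)).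
  rewrite e1 inZZ in p1; rewrite e2 inZZ in p2.
  have e3 : q - un m - (q - un n) = un n - un m.
    by rewrite opprB addrC addrA subrK.
  rewrite e3 in p1.
  have := dle _ Dmid; have := Jun n; have := Jun m; rewrite /J.
  move: p1 p2; set a := inner _ _; set b := inner _ _; set c := inner _ _;
    set e := inner _ _; set f := inner _ _; set g := inner _ _; set h := inner _ _.
  set i := inner _ _; rewrite expr2; set y1 := (m.+1%:R)^-1; set y2 := (n.+1%:R)^-1; lra.
have cU : ip_cauchy (hinner H) un.
  move=> eps e0.
  have [N hN] := small_inv (2:R) (ltac:(by rewrite divr_gt0 ?exprn_gt0) : 0 < eps ^+ 2 / 2).
  exists N => m n hm hn; change (hnorm (un m - un n) < eps); rewrite hnorm_lt //.
  have := key m n; have := hN m hm; have := hN n hn.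
  have := in_ge0 (A (un m) - A (un n)).
  set y1 := (m.+1%:R)^-1; set y2 := (n.+1%:R)^-1; lra.
have cA : ip_cauchy (hinner H') (fun n => A (un n)).
  move=> eps e0.
  have [N hN] := small_inv (2:R) (ltac:(by rewrite divr_gt0 ?exprn_gt0) : 0 < eps ^+ 2 / 2).
  exists N => m n hm hn; change (hnorm (A (un m) - A (un n)) < eps); rewrite hnorm_lt //.
  have := key m n; have := hN m hm; have := hN n hn.
  have := in_ge0 (un m - un n).
  set y1 := (m.+1%:R)^-1; set y2 := (n.+1%:R)^-1; lra.
have [l hl] := hcomplete cU.
have [y hy] := hcomplete cA.
have [Dl Aly] : D l /\ A l = y by case: hA => _ _ _ _ Acl; apply: Acl.
exists l; split => // w Dw; apply: le_trans (dle w Dw).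
apply/ler_addgt0Pr => e e0.
pose et := Num.min 1 (e / (d + 6)).
have d6 : 0 < d + 6 by lra.
have et0 : 0 < et by rewrite lt_min ltr01 divr_gt0.
have et1 : et <= 1 by rewrite ge_min lexx.
have ete : et * (d + 6) <= e.
  have : et <= e / (d + 6) by rewrite ge_min lexx orbT.
  by rewrite ler_pdivlMr.
have [N1 hN1] := small_inv (1:R) et0.
have [N2 hN2] := hl et et0.
have [N3 hN3] := hy et et0.
pose n := maxn N1 (maxn N2 N3).
have n1 : (N1 <= n)%N by rewrite leq_maxl.
have n2 : (N2 <= n)%N by rewrite /n (leq_trans _ (leq_maxr _ _)) // leq_maxl.
have n3 : (N3 <= n)%N by rewrite /n (leq_trans _ (leq_maxr _ _)) // leq_maxr.
have i1 := hN1 n n1. rewrite mul1r in i1.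
have i2 := hN2 n n2. change (is_true (hnorm (un n - l) < et)) in i2. rewrite hnorm_lt // in i2.
have i3 := hN3 n n3. change (is_true (hnorm (A (un n) - y) < et)) in i3. rewrite hnorm_lt // in i3.
have i4 := Jun n.
have a1 := in_add_le (q - un n) (un n - l) et0.
have a2 := in_add_le (A (un n)) (A l - A (un n)) et0.
rewrite addrA subrK in a1. rewrite addrC subrK in a2.
rewrite -opprB inN Aly in a2.
rewrite /J.
move: a1 a2 i1 i2 i3 i4; rewrite /J.
set N1' := inner (un n - l) _; set N2' := inner (A (un n) - y) _.
set Jq := inner (q - un n) _; set JA := inner (A (un n)) _.
set y1 := (n.+1%:R)^-1.
move=> a1 a2 i1 i2 i3 i4.
have g1 : 0 <= N1' by apply: in_ge0.
have g2 : 0 <= N2' by apply: in_ge0.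
have b1 : (1 + et^-1) * (N1' + N2') <= (1 + et^-1) * (2 * et ^+ 2).
  by rewrite ler_wpM2l ?addr_ge0 ?invr_ge0 ?ltW //; lra.
have b2 : (1 + et^-1) * (2 * et ^+ 2) = 2 * et ^+ 2 + 2 * et.
  have etn : et != 0 by rewrite gt_eqF.
  by rewrite expr2; field.
have b3 : (1 + et) * (Jq + JA) <= (1 + et) * (d + et).
  by rewrite ler_wpM2l ?addr_ge0 ?ltW //; lra.
have b4 : et ^+ 2 <= et by rewrite expr2 ger_pMl.
have b5 : et * d + 6 * et <= e by lra.
have : inner (q - l) (q - l) + inner y y <= (1 + et) * (Jq + JA) + (1 + et^-1) * (N1' + N2') by lra.
rewrite b2 in b1. rewrite Aly.
have : (1 + et) * (d + et) = d + et * d + et + et ^+ 2 by rewrite expr2; ring.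
lra.
Qed.

Lemma quad_zero (R : realType) (b c : R) : 0 <= c ->
  (forall t : R, 0 <= 2 * t * b + t ^+ 2 * c) -> b = 0.
Proof.
move=> c0 h.
have c1 : 0 < c + 1 by lra.
pose k := (c + 1)^-1.
have k0 : 0 < k by rewrite invr_gt0.
have kc : k * c = 1 - k by rewrite /k; field; rewrite gt_eqF.
have := h (- b * k).
have -> : 2 * (- b * k) * b + (- b * k) ^+ 2 * c = - (b ^+ 2 * k * (1 + k)).
  by rewrite !expr2; rewrite -[b * b * k * (1 + k)]/(b * b * k * (1 + k)); nra.
rewrite oppr_ge0 => hb.
have : b ^+ 2 * (k * (1 + k)) <= 0 by rewrite mulrA.
rewrite pmulr_lle0 ?mulr_gt0 ?addr_gt0 // => hb2.
by apply/eqP; rewrite -sqrf_eq0 eq_le hb2 sqr_ge0.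
Qed.

Lemma hard (R : realType) (H H' : hilbert R) (D : H -> Prop) (A : H -> H')
  (Ds : H' -> Prop) (As : H' -> H) (q : H) :
  dd_closed_op D A -> is_adjoint D A Ds As ->
  (forall y, Ds y -> inner q (As y) = 0) -> D q /\ A q = 0.
Proof.
move=> hA [h1 h2] hq.
have [l [Dl lmin]] := minimizer q hA.
have var : forall v, D v -> inner (A l) (A v) = inner (q - l) v.
  move=> v Dv; apply/eqP; rewrite -subr_eq0; apply/eqP.
  apply: (quad_zero (c := inner v v + inner (A v) (A v))).
    by rewrite addr_ge0 ?in_ge0.
  move=> t; have := lmin (t *: v + l) (domZD hA t Dv Dl).
  rewrite (opZD hA) // [t *: A v + _]addrC.
  have -> : q - (t *: v + l) = (q - l) + (- t) *: v by rewrite opprD addrCA addrC scaleNr.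
  rewrite !inAddZ sqrrN; lra.
have DsAl : Ds (A l).
  by apply: (proj2 (h1 _)); exists (q - l); move=> x Dx; rewrite inC var // inC.
have AsAl : As (A l) = q - l.
  apply/eqP; rewrite -subr_eq0; apply/eqP; apply: (dense_orth hA) => v Dv.
  by rewrite inBr -h2 // inC var // inC subrr.
have e1 := hq _ DsAl; rewrite AsAl in e1.
have e2 := var l Dl.
have e3 : inner (q - l) (q - l) = - inner (A l) (A l).
  by rewrite inBl e1 e2 inC sub0r.
have g1 := in_ge0 (q - l); have g2 := in_ge0 (A l).
have z1 : inner (q - l) (q - l) = 0 by lra.
have z2 : inner (A l) (A l) = 0 by lra.
have ql : q = l by apply/eqP; rewrite -subr_eq0; apply/eqP; apply: in_eq0.
by rewrite ql; split => //; apply: in_eq0.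
Qed.

Lemma proj_unique (R : realType) (H : hilbert R) (S : H -> Prop) (P : H -> H) :
  orth_proj S P -> (forall a b, S a -> S b -> S (a - b)) ->
  forall x p, S p -> (forall y, S y -> inner (x - p) y = 0) -> P x = p.
Proof.
move=> hP hS x p Sp hp; have [SP hP'] := hP x.
have Sd := hS _ _ SP Sp.
have e1 := hP' _ Sd; have e2 := hp _ Sd.
apply/eqP; rewrite -subr_eq0; apply/eqP; apply: in_eq0.
move: e1 e2; rewrite !inBl !inBr; lra.
Qed.

Lemma pyth3 (R : realType) (H : hilbert R) (a b c : H) :
  inner a b = 0 -> inner a c = 0 -> inner b c = 0 ->
  inner (a + (b + c)) (a + (b + c)) = inner a a + inner b b + inner c c.
Proof.
move=> h1 h2 h3; rewrite !inDl !inDr (inC b a) (inC c a) (inC c b) h1 h2 h3; lra.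
Qed.

Unset Implicit Arguments.

Theorem corollary4p2 (R : realType) (H0 H1 H2 H3 H4 : hilbert R)
  (D0 : H0 -> Prop) (A0 : H0 -> H1) (D0s : H1 -> Prop) (A0s : H1 -> H0)
  (D1 : H1 -> Prop) (A1 : H1 -> H2) (D1s : H2 -> Prop) (A1s : H2 -> H1)
  (D2 : H2 -> Prop) (A2 : H2 -> H3) (D2s : H3 -> Prop) (A2s : H3 -> H2)
  (D3 : H3 -> Prop) (A3 : H3 -> H4) (D3s : H4 -> Prop) (A3s : H4 -> H3)
  (hA0 : dd_closed_op D0 A0) (hA1 : dd_closed_op D1 A1)
  (hA2 : dd_closed_op D2 A2) (hA3 : dd_closed_op D3 A3)
  (hA0s : is_adjoint D0 A0 D0s A0s) (hA1s : is_adjoint D1 A1 D1s A1s)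
  (hA2s : is_adjoint D2 A2 D2s A2s) (hA3s : is_adjoint D3 A3 D3s A3s)
  (* complex property R(A_l) \subset N(A_{l+1}) *)
  (hc0 : forall y, range D0 A0 y -> kernel D1 A1 y)
  (hc1 : forall y, range D1 A1 y -> kernel D2 A2 y)
  (hc2 : forall y, range D2 A2 y -> kernel D3 A3 y)
  (* standing assumptions *)
  (hR1 : closed_set (range D1 A1)) (hR2 : closed_set (range D2 A2))
  (hK2 : finite_dim (fun x => kernel D2 A2 x /\ kernel D1s A1s x))
  (* orthogonal projectors onto K_2, R(A_1), R(A_2^* ) *)
  (pi2 piA1 piA2s : H2 -> H2)
  (hpi2 : orth_proj (fun x => kernel D2 A2 x /\ kernel D1s A1s x) pi2)
  (hpiA1 : orth_proj (range D1 A1) piA1)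
  (hpiA2s : orth_proj (range D2s A2s) piA2s)
  (* best constants c_1, c_2 *)
  (c1 c2 : R)
  (hc1b : best_const D1 A1 D1s A1s c1) (hc2b : best_const D2 A2 D2s A2s c2)
  (* data and the solution x *)
  (f : H3) (g : H1) (k : H2)
  (hf : range D2 A2 f) (hg : range D1s A1s g)
  (hk : kernel D2 A2 k /\ kernel D1s A1s k)
  (x : H2) (hxD2 : D2 x) (hxD1s : D1s x)
  (hxf : A2 x = f) (hxg : A1s x = g) (hxk : pi2 x = k)
  (xt : H2) :
  let e := x - xt in
  let eA1 := piA1 e in
  let eA2s := piA2s e in
  let eK2 := pi2 e in
  (* (i) *)
  (D1s xt ->
     [/\ D1s e, D1s eA1 /\ range D1 A1 eA1, A1s eA1 = A1s e,
         hnorm eA1 <= c1 * hnorm (A1s xt - g)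
       & c1 * hnorm (A1s xt - g) = c1 * hnorm (A1s e)]) /\
  (* (ii) *)
  (D2 xt ->
     [/\ D2 e, D2 eA2s /\ range D2s A2s eA2s, A2 eA2s = A2 e,
         hnorm eA2s <= c2 * hnorm (A2 xt - f)
       & c2 * hnorm (A2 xt - f) = c2 * hnorm (A2 e)]) /\
  (* (iii) *)
  (D2 xt -> D1s xt ->
     let normD2sq := hnorm e ^+ 2 + hnorm (A2 e) ^+ 2 + hnorm (A1s e) ^+ 2 in
     [/\ D2 e /\ D1s e,
         normD2sq = hnorm eA1 ^+ 2 + hnorm eK2 ^+ 2 + hnorm eA2s ^+ 2
                    + hnorm (A2 e) ^+ 2 + hnorm (A1s e) ^+ 2,
         hnorm eA1 ^+ 2 + hnorm eK2 ^+ 2 + hnorm eA2s ^+ 2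
           + hnorm (A2 e) ^+ 2 + hnorm (A1s e) ^+ 2
           <= hnorm eK2 ^+ 2 + (1 + c2 ^+ 2) * hnorm (A2 e) ^+ 2
              + (1 + c1 ^+ 2) * hnorm (A1s e) ^+ 2
       & [/\ eK2 = k - pi2 xt, A2 e = f - A2 xt & A1s e = g - A1s xt]]).
Proof.
move=> e eA1 eA2s eK2.
have hRA1 : forall z, range D1 A1 z -> D2 z /\ A2 z = 0 by move=> z /hc1 [].
have o1 : forall a k', range D1 A1 a -> D1s k' -> A1s k' = 0 -> inner a k' = 0.
  move=> a k' [u [Du <-]] Dk Ak; by rewrite hA1s.2 // Ak in0r.
have o2 : forall n b, D2 n -> A2 n = 0 -> range D2s A2s b -> inner n b = 0.
  move=> n b Dn An [y [Dy <-]]; by rewrite -hA2s.2 // An in0l.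
have o3 : forall b, range D2s A2s b -> D1s b /\ A1s b = 0.
  move=> b Rb; apply: (adj_ker hA1 hA1s) => u Du.
  have [D2u A2u] := hRA1 (A1 u) (ex_intro _ u (conj Du erefl)).
  exact: o2.
have SK2 : forall a b, (kernel D2 A2 a /\ kernel D1s A1s a) ->
    (kernel D2 A2 b /\ kernel D1s A1s b) ->
    (kernel D2 A2 (a - b) /\ kernel D1s A1s (a - b)).
  move=> a b [[Da Aa] [Dsa Asa]] [[Db Ab] [Dsb Asb]].
  have [Dsab Asab] := adjB hA1 hA1s Dsa Dsb.
  split; split.
  - exact: (domB hA2).
  - by rewrite (opB hA2) // Aa Ab subrr.
  - exact: Dsab.
  - by rewrite Asab Asa Asb subrr.
have eE : forall a b : H2, a = a - b + b by move=> a b; rewrite subrK.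
have hI : D1s xt -> [/\ D1s e, D1s eA1, A1s eA1 = A1s e, A1s e = g - A1s xt
     & D1s (e - eA1) /\ A1s (e - eA1) = 0].
  move=> Dxt.
  have [De Ae] := adjB hA1 hA1s hxD1s Dxt.
  have [RA1 hpe] := hpiA1 e.
  have [Dr Ar] : D1s (e - eA1) /\ A1s (e - eA1) = 0.
    apply: (adj_ker hA1 hA1s) => u Du; rewrite inC; apply: hpe.
    by exists u.
  have [Da Aa] := adjB hA1 hA1s De Dr.
  have ee : e - (e - eA1) = eA1 by rewrite opprB addrC subrK.
  rewrite ee in Da Aa.
  split => //.
  - by rewrite Aa Ar subr0.
  - by rewrite /e Ae hxg.
have hII : D2 xt -> [/\ D2 e, D2 eA2s, A2 eA2s = A2 e, A2 e = f - A2 xt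
     & D2 (e - eA2s) /\ A2 (e - eA2s) = 0].
  move=> Dxt.
  have De : D2 e by apply: (domB hA2).
  have Ae : A2 e = f - A2 xt by rewrite /e (opB hA2) // hxf.
  have [RA2 hpe] := hpiA2s e.
  have [Dq Aq] : D2 (e - eA2s) /\ A2 (e - eA2s) = 0.
    apply: (hard hA2 hA2s) => y Dy; apply: hpe; by exists y.
  have ee : e - (e - eA2s) = eA2s by rewrite opprB addrC subrK.
  have Da := domB hA2 De Dq; have Aa := opB hA2 De Dq.
  rewrite ee in Da Aa.
  split => //.
  by rewrite Aa Aq subr0.
have [c1pos pb1 _ pba1 _] := hc1b.
have [c2pos pb2 _ pba2 _] := hc2b.
have bI : D1s xt -> hnorm eA1 <= c1 * hnorm (A1s e).
  move=> Dxt; have [_ Da Aa _ _] := hI Dxt.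
  rewrite -Aa; apply: pba1 => //; exact: (hpiA1 e).1.
have bII : D2 xt -> hnorm eA2s <= c2 * hnorm (A2 e).
  move=> Dxt; have [_ Da Aa _ _] := hII Dxt.
  rewrite -Aa; apply: pb2 => //; exact: (hpiA2s e).1.
split.
  move=> Dxt; have [De Da Aa Ae _] := hI Dxt.
  have en : hnorm (A1s xt - g) = hnorm (A1s e) by rewrite Ae -opprB hnormN.
  split => //.
  - by split => //; exact: (hpiA1 e).1.
  - by rewrite en; apply: bI.
  - by rewrite en.
split.
  move=> Dxt; have [De Da Aa Ae _] := hII Dxt.
  have en : hnorm (A2 xt - f) = hnorm (A2 e) by rewrite Ae -opprB hnormN.
  split => //.
  - by split => //; exact: (hpiA2s e).1.
  - by rewrite en; apply: bII.
  - by rewrite en.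
move=> Dxt2 Dxt1 normD2sq.
have [De1 Da1 Aa1 Ae1 [Dr1 Ar1]] := hI Dxt1.
have [De2 Da2 Aa2 Ae2 [Dr2 Ar2]] := hII Dxt2.
have RA1 := (hpiA1 e).1; have RA2 := (hpiA2s e).1.
pose r := e - eA1 - eA2s.
have Kr : kernel D2 A2 r /\ kernel D1s A1s r.
  have [D2a A2a] := hRA1 _ RA1.
  have [D1b A1b] := o3 _ RA2.
  have [Dsr Asr] := adjB hA1 hA1s Dr1 D1b.
  have rr : r = e - eA2s - eA1 by rewrite /r addrAC.
  split; split.
  - by rewrite rr; apply: (domB hA2).
  - by rewrite rr (opB hA2) // Ar2 A2a subrr.
  - exact: Dsr.
  - by rewrite /r Asr Ar1 A1b subrr.
have orthK : forall k', kernel D2 A2 k' /\ kernel D1s A1s k' -> inner eA1 k' = 0 /\ inner eA2s k' = 0.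
  move=> k' [[Dk Ak] [Dsk Ask]]; split; first exact: o1.
  by rewrite inC; apply: o2.
have pe : eK2 = r.
  apply: (proj_unique hpi2 SK2) => // y Ky.
  have [h1 h2] := orthK y Ky.
  move: h1 h2; rewrite /r !inBl; lra.
have pl : pi2 e = pi2 x - pi2 xt.
  apply: (proj_unique hpi2 SK2); first by apply: SK2; apply: (hpi2 _).1.
  move=> y Ky; have h1 := (hpi2 x).2 y Ky; have h2 := (hpi2 xt).2 y Ky.
  move: h1 h2; rewrite /e !inBl; lra.
have a12 : inner eA1 eA2s = 0.
  have [D2a A2a] := hRA1 _ RA1; exact: o2.
have [k1 k2] := orthK _ Kr.
have ed : e = eA1 + (r + eA2s) by rewrite /r subrK addrC subrK.
have Ne : inner e e = inner eA1 eA1 + inner r r + inner eA2s eA2s.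
  by rewrite {1 2}ed pyth3 // inC.
have b1 := bI Dxt1; have b2 := bII Dxt2.
have g1 := hnorm_ge0 eA1; have g2 := hnorm_ge0 eA2s.
have s1 : hnorm eA1 ^+ 2 <= c1 ^+ 2 * hnorm (A1s e) ^+ 2.
  rewrite -exprMn; move: b1 g1; set u := hnorm eA1; set v := c1 * _ => hb0 hg0.
  rewrite !expr2; nra.
have s2 : hnorm eA2s ^+ 2 <= c2 ^+ 2 * hnorm (A2 e) ^+ 2.
  rewrite -exprMn; move: b2 g2; set u := hnorm eA2s; set v := c2 * _ => hb0 hg0.
  rewrite !expr2; nra.
split.
- by [].
- rewrite /normD2sq !hnorm_sq Ne pe; lra.
- lra.
- split => //.
  + by rewrite /eK2 pl hxk.
Qed.
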